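(* Let $K_1\subset\mathbb C^m$ be a compact set with $A_D(K_1)=\overline{\mathcal O}(K_1)$, let $\omega\in A_D(K_1)$, and let \[ K=\{(z,w)\in\mathbb C^{m+1}: z\in K_1,\ w=\omega(z)\} \] be the graph of $\omega$. Then $A_D(K)=\overline{\mathcal O}(K)$.
   Context: For a compact $K\subset\mathbb C^n$: $\overline{\mathcal O}(K)$ is the closure in $C(K)$ (supremum norm) of restrictions to $K$ of functions holomorphic on some open neighbourhood of $K$; $A_D(K)$ is the set of continuous functions $f:K\to\mathbb C$ such that for every open disc $D\subset\mathbb C$ and every injective holomorphic mapping $\phi:D\to\mathbb C^n$ with $\phi(D)\subset K$, $f\circ\phi$ is holomorphic on $D$. *)

(* Defs.v *)
From Stdlib Require Import Reals.
Open Scope R_scope.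

Definition Cx : Type := (R * R)%type.
Definition Czero : Cx := (0, 0).
Definition Cadd (a b : Cx) : Cx := (fst a + fst b, snd a + snd b).
Definition Copp (a : Cx) : Cx := (- fst a, - snd a).
Definition Csub (a b : Cx) : Cx := Cadd a (Copp b).
Definition Cmul (a b : Cx) : Cx :=
  (fst a * fst b - snd a * snd b, fst a * snd b + snd a * fst b).
Definition Cabs (a : Cx) : R := sqrt (fst a * fst a + snd a * snd a).

(* A point of C^n is represented by a map v : nat -> Cx whose coordinates of
   index >= n vanish; [inCn n v] expresses this. Coordinates are v 0, ..., v (n-1). *)
Definition vec : Type := nat -> Cx.
Definition inCn (n : nat) (v : vec) : Prop := forall i, (n <= i)%nat -> v i = Czero.
Definition vadd (u v : vec) : vec := fun i => Cadd (u i) (v i).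
Definition vsub (u v : vec) : vec := fun i => Csub (u i) (v i).

Fixpoint normsq (n : nat) (v : vec) : R :=
  match n with
  | O => 0
  | S k => normsq k v + Cabs (v k) * Cabs (v k)
  end.
Definition vnorm (n : nat) (v : vec) : R := sqrt (normsq n v).

Fixpoint lin (n : nat) (a h : vec) : Cx :=
  match n with
  | O => Czero
  | S k => Cadd (lin k a h) (Cmul (a k) (h k))
  end.

Definition open_in (n : nat) (U : vec -> Prop) : Prop :=
  (forall x, U x -> inCn n x) /\
  forall x, U x -> exists r, 0 < r /\
    forall y, inCn n y -> vnorm n (vsub y x) < r -> U y.

Definition compact_in (n : nat) (K : vec -> Prop) : Prop :=
  (forall x, K x -> inCn n x) /\
  forall (I : Type) (U : I -> vec -> Prop),
    (forall i, open_in n (U i)) ->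
    (forall x, K x -> exists i, U i x) ->
    exists l : list I, forall x, K x -> exists i, List.In i l /\ U i x.

Definition cont_on (n : nat) (K : vec -> Prop) (f : vec -> Cx) : Prop :=
  forall x, K x -> forall eps, 0 < eps -> exists d, 0 < d /\
    forall y, K y -> vnorm n (vsub y x) < d -> Cabs (Csub (f y) (f x)) < eps.

Definition holo_on (n : nat) (U : vec -> Prop) (f : vec -> Cx) : Prop :=
  forall z, U z -> exists a : vec, forall eps, 0 < eps -> exists d, 0 < d /\
    forall h, inCn n h -> 0 < vnorm n h -> vnorm n h < d ->
      Cabs (Csub (Csub (f (vadd z h)) (f z)) (lin n a h)) <= eps * vnorm n h.

Definition disc (c : Cx) (r : R) (z : Cx) : Prop := Cabs (Csub z c) < r.

Definition holo1_on (D : Cx -> Prop) (g : Cx -> Cx) : Prop :=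
  forall z, D z -> exists a : Cx, forall eps, 0 < eps -> exists d, 0 < d /\
    forall h, 0 < Cabs h -> Cabs h < d ->
      Cabs (Csub (Csub (g (Cadd z h)) (g z)) (Cmul a h)) <= eps * Cabs h.

(* Obar(K): closure in C(K) of restrictions of functions holomorphic on
   open neighbourhoods of K *)
Definition Obar (n : nat) (K : vec -> Prop) (f : vec -> Cx) : Prop :=
  cont_on n K f /\
  forall eps, 0 < eps -> exists U : vec -> Prop, exists g : vec -> Cx,
    open_in n U /\ (forall x, K x -> U x) /\ holo_on n U g /\
    forall x, K x -> Cabs (Csub (f x) (g x)) < eps.

Definition AD (n : nat) (K : vec -> Prop) (f : vec -> Cx) : Prop :=
  cont_on n K f /\
  forall (c : Cx) (r : R) (phi : Cx -> vec),
    0 < r ->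
    (forall i, (i < n)%nat -> holo1_on (disc c r) (fun z => phi z i)) ->
    (forall z1 z2, disc c r z1 -> disc c r z2 -> phi z1 = phi z2 -> z1 = z2) ->
    (forall z, disc c r z -> K (phi z)) ->
    holo1_on (disc c r) (fun z => f (phi z)).

Definition trunc (m : nat) (v : vec) : vec :=
  fun i => if Nat.ltb i m then v i else Czero.

Definition graph (m : nat) (K1 : vec -> Prop) (omega : vec -> Cx) (v : vec) : Prop :=
  inCn (S m) v /\ K1 (trunc m v) /\ v m = omega (trunc m v).

(* Main.v *)
Require Import Defs.
From Stdlib Require Import Reals Lra Psatz FunctionalExtensionality Arith.
Open Scope R_scope.

Lemma pair_eq (a b : Cx) : fst a = fst b -> snd a = snd b -> a = b.
Proof. destruct a, b; simpl; intros -> ->; reflexivity. Qed.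

Lemma sq_le x y : 0 <= y -> x * x <= y * y -> x <= y.
Proof. intros; nra. Qed.
Lemma sq_lt x y : 0 <= x -> 0 <= y -> x * x < y * y -> x < y.
Proof. intros; nra. Qed.

Lemma Cabs_ge0 a : 0 <= Cabs a.
Proof. apply sqrt_pos. Qed.
Lemma Cabs_sq a : Cabs a * Cabs a = fst a * fst a + snd a * snd a.
Proof. unfold Cabs; apply sqrt_sqrt; nra. Qed.
Lemma Cabs_eq a b : fst a = fst b -> snd a = snd b -> Cabs a = Cabs b.
Proof. intros; rewrite (pair_eq a b); auto. Qed.
Lemma Cabs_zero : Cabs Czero = 0.
Proof. unfold Cabs, Czero; simpl. replace (0*0+0*0) with 0 by ring. apply sqrt_0. Qed.
Lemma Cabs_eq0 a : Cabs a = 0 -> a = Czero.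
Proof. intro H. pose proof (Cabs_sq a). rewrite H in H0.
  apply pair_eq; simpl; nra. Qed.
Lemma Cabs_triangle a b : Cabs (Cadd a b) <= Cabs a + Cabs b.
Proof.
  pose proof (Cabs_sq a); pose proof (Cabs_sq b); pose proof (Cabs_sq (Cadd a b)).
  pose proof (Cabs_ge0 a); pose proof (Cabs_ge0 b).
  destruct a as [x1 x2], b as [y1 y2]; unfold Cadd in *; simpl in *.
  set (A := Cabs (x1,x2)) in *. set (B := Cabs (y1,y2)) in *.
  set (S := Cabs (x1+y1, x2+y2)) in *.
  assert (HAB : (x1*y1+x2*y2)*(x1*y1+x2*y2) <= (A*B)*(A*B)).
  { replace ((A*B)*(A*B)) with ((A*A)*(B*B)) by ring. rewrite H, H0.
    pose proof (Rle_0_sqr (x1*y2-x2*y1)); unfold Rsqr in *. nra. }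
  assert (x1*y1+x2*y2 <= A*B) by (apply sq_le; nra).
  apply sq_le; [lra|]. nra.
Qed.
Lemma Cabs_mul a b : Cabs (Cmul a b) = Cabs a * Cabs b.
Proof.
  unfold Cabs, Cmul; rewrite <- sqrt_mult by nra. f_equal; simpl; ring.
Qed.
Lemma Cabs_sub_sym a b : Cabs (Csub a b) = Cabs (Csub b a).
Proof. unfold Cabs, Csub, Cadd, Copp; simpl; f_equal; ring. Qed.
Lemma Cabs_sub_tri a b c : Cabs (Csub a c) <= Cabs (Csub a b) + Cabs (Csub b c).
Proof.
  replace (Csub a c) with (Cadd (Csub a b) (Csub b c)) by
    (apply pair_eq; unfold Csub, Cadd, Copp; simpl; ring).
  apply Cabs_triangle.
Qed.

Lemma normsq_ge0 n v : 0 <= normsq n v.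
Proof. induction n; simpl; [lra|]. pose proof (Cabs_ge0 (v n)); nra. Qed.
Lemma vnorm_ge0 n v : 0 <= vnorm n v.
Proof. apply sqrt_pos. Qed.
Lemma vnorm_sq n v : vnorm n v * vnorm n v = normsq n v.
Proof. apply sqrt_sqrt, normsq_ge0. Qed.
Lemma normsq_ext n u v : (forall i, (i<n)%nat -> u i = v i) -> normsq n u = normsq n v.
Proof. induction n; intros H; simpl; auto. rewrite IHn by (intros; apply H; lia).
  rewrite H by lia. reflexivity. Qed.
Lemma lin_ext n a b h k : (forall i, (i<n)%nat -> a i = b i /\ h i = k i) -> lin n a h = lin n b k.
Proof. induction n; intros H; simpl; auto. rewrite IHn by (intros; apply H; lia).
  destruct (H n) as [-> ->]; auto. Qed.
Lemma normsq_le n p v : (n <= p)%nat -> normsq n v <= normsq p v.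
Proof. induction 1; [lra|]. simpl. pose proof (Cabs_ge0 (v m)); nra. Qed.
Lemma vnorm_le n p v : (n <= p)%nat -> vnorm n v <= vnorm p v.
Proof. intros; apply sqrt_le_1_alt, normsq_le; auto. Qed.
Lemma coord_le n v i : (i < n)%nat -> Cabs (v i) <= vnorm n v.
Proof. intros H. apply sq_le; [apply vnorm_ge0|]. rewrite vnorm_sq.
  pose proof (normsq_le (S i) n v H). simpl in H0. pose proof (normsq_ge0 i v). lra. Qed.
Lemma normsq_zero n v : normsq n v = 0 -> forall i, (i<n)%nat -> v i = Czero.
Proof. intros H i Hi. apply Cabs_eq0. pose proof (coord_le n v i Hi).
  unfold vnorm in H0. rewrite H, sqrt_0 in H0. pose proof (Cabs_ge0 (v i)); lra. Qed.
Lemma vnorm_S n v : vnorm (S n) v = Cabs (vnorm n v, Cabs (v n)).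
Proof. unfold Cabs at 1; simpl. rewrite vnorm_sq. reflexivity. Qed.
Lemma vnorm_tri n u v : vnorm n (vadd u v) <= vnorm n u + vnorm n v.
Proof.
  induction n.
  - unfold vnorm; simpl. rewrite sqrt_0; lra.
  - rewrite !vnorm_S. eapply Rle_trans; [|apply Cabs_triangle].
    pose proof (Cabs_triangle (u n) (v n)).
    pose proof (Cabs_ge0 (Cadd (u n) (v n))). pose proof (vnorm_ge0 n (vadd u v)).
    pose proof (vnorm_ge0 n u); pose proof (vnorm_ge0 n v).
    pose proof (Cabs_ge0 (u n)); pose proof (Cabs_ge0 (v n)).
    unfold vadd in *.
    set (p := vnorm n (fun i => Cadd (u i) (v i))) in *.
    set (q := Cabs (Cadd (u n) (v n))) in *.
    set (A := vnorm n u) in *. set (B := vnorm n v) in *.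
    set (al := Cabs (u n)) in *. set (be := Cabs (v n)) in *.
    unfold Cabs at 1 2, Cadd; simpl. apply sqrt_le_1_alt.
    apply Rplus_le_compat; apply Rmult_le_compat; lra.
Qed.
Fixpoint asum (n : nat) (a : vec) : R :=
  match n with O => 0 | S k => asum k a + Cabs (a k) end.
Lemma asum_ge0 n a : 0 <= asum n a.
Proof. induction n; simpl; [lra|]. pose proof (Cabs_ge0 (a n)); lra. Qed.
Lemma lin_bound n a h : Cabs (lin n a h) <= asum n a * vnorm n h.
Proof.
  induction n; simpl.
  - unfold vnorm; simpl. rewrite sqrt_0, Cabs_zero; lra.
  - eapply Rle_trans; [apply Cabs_triangle|]. rewrite Cabs_mul.
    pose proof (vnorm_le n (S n) h ltac:(lia)). pose proof (coord_le (S n) h n ltac:(lia)).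
    pose proof (asum_ge0 n a). pose proof (Cabs_ge0 (a n)). nra.
Qed.

Ltac peq := apply pair_eq; unfold Csub, Cadd, Copp, Cmul, Czero; simpl; ring.

Lemma vadd_vsub x y : vadd x (vsub y x) = y.
Proof. apply functional_extensionality; intro i; unfold vadd, vsub; peq. Qed.
Lemma vsub_split y' y x : vsub y' x = vadd (vsub y' y) (vsub y x).
Proof. apply functional_extensionality; intro i; unfold vadd, vsub; peq. Qed.
Lemma normsq_self n x : normsq n (vsub x x) = 0.
Proof. induction n; simpl; auto. rewrite IHn.
  replace (vsub x x n) with Czero by (unfold vsub; peq). rewrite Cabs_zero; ring. Qed.
Lemma vnorm_self n x : vnorm n (vsub x x) = 0.
Proof. unfold vnorm; rewrite normsq_self; apply sqrt_0. Qed.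
Lemma inCn_vsub n u v : inCn n u -> inCn n v -> inCn n (vsub u v).
Proof. intros Hu Hv i Hi; unfold vsub; rewrite Hu, Hv by auto; peq. Qed.
Lemma inCn_vadd n u v : inCn n u -> inCn n v -> inCn n (vadd u v).
Proof. intros Hu Hv i Hi; unfold vadd; rewrite Hu, Hv by auto; peq. Qed.
Lemma vnorm_zero_eq n u : inCn n u -> vnorm n u = 0 -> u = (fun _ => Czero).
Proof. intros Hu H. apply sqrt_eq_0 in H; [|apply normsq_ge0].
  apply functional_extensionality; intro i. destruct (Nat.lt_ge_cases i n).
  - eapply normsq_zero; eauto.
  - apply Hu; auto. Qed.
Lemma vadd_zero z : vadd z (fun _ => Czero) = z.
Proof. apply functional_extensionality; intro i; unfold vadd; peq. Qed.

Lemma holo_cont n U g z : open_in n U -> holo_on n U g -> U z ->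
  forall eps, 0 < eps -> exists d, 0 < d /\ forall y, inCn n y ->
    vnorm n (vsub y z) < d -> Cabs (Csub (g y) (g z)) < eps.
Proof.
  intros HU Hg Hz eps Heps.
  destruct (Hg z Hz) as [a Ha]. destruct (Ha 1 ltac:(lra)) as [d1 [Hd1 H1]].
  pose proof (asum_ge0 n a).
  exists (Rmin d1 (eps / (asum n a + 1))). split.
  { apply Rmin_pos; auto. apply Rdiv_lt_0_compat; lra. }
  intros y Hy Hyz.
  assert (Hzn : inCn n z) by (apply (proj1 HU); auto).
  assert (Hh : inCn n (vsub y z)) by (apply inCn_vsub; auto).
  pose proof (vnorm_ge0 n (vsub y z)).
  destruct (Req_dec (vnorm n (vsub y z)) 0) as [E|E].
  - apply vnorm_zero_eq in E; auto. rewrite <- (vadd_vsub z y), E, vadd_zero.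
    replace (Csub (g z) (g z)) with Czero by peq. rewrite Cabs_zero; auto.
  - assert (Hpos : 0 < vnorm n (vsub y z)) by lra.
    pose proof (Rmin_l d1 (eps / (asum n a + 1))).
    pose proof (Rmin_r d1 (eps / (asum n a + 1))).
    specialize (H1 (vsub y z) Hh Hpos ltac:(lra)). rewrite vadd_vsub in H1.
    replace (Csub (g y) (g z)) with
      (Cadd (Csub (Csub (g y) (g z)) (lin n a (vsub y z))) (lin n a (vsub y z))) by peq.
    eapply Rle_lt_trans; [apply Cabs_triangle|].
    pose proof (lin_bound n a (vsub y z)).
    assert (vnorm n (vsub y z) * (asum n a + 1) < eps).
    { assert (Hlt : vnorm n (vsub y z) < eps / (asum n a + 1)) by lra.
      apply (Rmult_lt_compat_r (asum n a + 1)) in Hlt; [|lra].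
      unfold Rdiv in Hlt. rewrite Rmult_assoc, Rinv_l in Hlt by lra. lra. }
    nra.
Qed.

Lemma ball_open n x r : open_in n (fun y => inCn n y /\ vnorm n (vsub y x) < r).
Proof.
  split. { intros y [H _]; auto. }
  intros y [Hy Hyr]. exists (r - vnorm n (vsub y x)). split; [lra|].
  intros y' Hy' H'. split; auto. rewrite (vsub_split y' y x).
  pose proof (vnorm_tri n (vsub y' y) (vsub y x)). lra.
Qed.

Definition ext (m : nat) (w : Cx) (z : vec) : vec :=
  fun i => if Nat.eqb i m then w else z i.

Lemma ext_inCn m w z : inCn m z -> inCn (S m) (ext m w z).
Proof. intros H i Hi; unfold ext. destruct (Nat.eqb_spec i m); [lia|]. apply H; lia. Qed.
Lemma inCn_trunc m v : inCn m (trunc m v).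
Proof. intros i Hi; unfold trunc. destruct (Nat.ltb_spec i m); [lia|auto]. Qed.
Lemma trunc_ext m w z : inCn m z -> trunc m (ext m w z) = z.
Proof. intros H; apply functional_extensionality; intro i; unfold trunc, ext.
  destruct (Nat.ltb_spec i m); destruct (Nat.eqb_spec i m); try lia; auto.
  all: symmetry; apply H; lia. Qed.
Lemma ext_trunc m v : inCn (S m) v -> v = ext m (v m) (trunc m v).
Proof. intros H; apply functional_extensionality; intro i; unfold trunc, ext.
  destruct (Nat.ltb_spec i m); destruct (Nat.eqb_spec i m); subst; try lia; auto.
  apply H; lia. Qed.
Lemma normsq_ext_diff m w w' z x :
  normsq (S m) (vsub (ext m w z) (ext m w' x)) =
  normsq m (vsub z x) + Cabs (Csub w w') * Cabs (Csub w w').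
Proof. simpl. replace (vsub (ext m w z) (ext m w' x) m) with (Csub w w')
    by (unfold vsub, ext; rewrite Nat.eqb_refl; auto). f_equal.
  apply normsq_ext; intros i Hi; unfold vsub, ext.
  destruct (Nat.eqb_spec i m); [lia|auto]. Qed.
Lemma vnorm_trunc m y x : vnorm m (vsub (trunc m y) (trunc m x)) <= vnorm (S m) (vsub y x).
Proof. unfold vnorm at 1. rewrite (normsq_ext m _ (vsub y x)).
  - apply vnorm_le; lia.
  - intros i Hi; unfold vsub, trunc. destruct (Nat.ltb_spec i m); [auto|lia]. Qed.

Section G.
Variables (m : nat) (K1 : vec -> Prop) (omega : vec -> Cx).
Hypothesis HK : compact_in m K1.

Lemma graph_ext z : K1 z -> graph m K1 omega (ext m (omega z) z).
Proof. intros Hz. assert (inCn m z) by (apply (proj1 HK); auto).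
  split; [apply ext_inCn; auto|]. rewrite trunc_ext by auto. split; auto.
  unfold ext; rewrite Nat.eqb_refl; auto. Qed.
Lemma graph_eq v : graph m K1 omega v -> v = ext m (omega (trunc m v)) (trunc m v).
Proof. intros [H1 [H2 H3]]. rewrite <- H3. apply ext_trunc; auto. Qed.
Lemma graph_K1 v : graph m K1 omega v -> K1 (trunc m v).
Proof. intros [_ [H _]]; auto. Qed.
Lemma K1_inCn z : K1 z -> inCn m z.
Proof. apply (proj1 HK). Qed.
End G.

Lemma vnorm_lt_of n v r : 0 < r -> normsq n v < r * r -> vnorm n v < r.
Proof. intros; apply sq_lt; [apply vnorm_ge0|lra|]. rewrite vnorm_sq; auto. Qed.
Lemma normsq_lt_of n v r : vnorm n v < r -> normsq n v < r * r.
Proof. intros; rewrite <- vnorm_sq. pose proof (vnorm_ge0 n v). nra. Qed.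

Lemma cont_f1 m K1 omega f : compact_in m K1 ->
  cont_on (S m) (graph m K1 omega) f -> cont_on m K1 omega ->
  cont_on m K1 (fun z => f (ext m (omega z) z)).
Proof.
  intros HK Hf Hw x Hx eps Heps.
  destruct (Hf _ (graph_ext m K1 omega HK x Hx) eps Heps) as [d1 [Hd1 H1]].
  destruct (Hw x Hx (d1/2) ltac:(lra)) as [d2 [Hd2 H2]].
  exists (Rmin (d1/2) d2). split; [apply Rmin_pos; lra|].
  intros y Hy Hyx. apply H1; [apply graph_ext; auto|].
  pose proof (Rmin_l (d1/2) d2); pose proof (Rmin_r (d1/2) d2).
  apply vnorm_lt_of; auto. rewrite normsq_ext_diff.
  assert (normsq m (vsub y x) < (d1/2)*(d1/2)) by (apply normsq_lt_of; lra).
  specialize (H2 y Hy ltac:(lra)). pose proof (Cabs_ge0 (Csub (omega y) (omega x))).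
  nra.
Qed.

Lemma lin_trunc m a h : lin (S m) (trunc m a) h = lin m a (trunc m h).
Proof. simpl. rewrite (lin_ext m (trunc m a) a h (trunc m h)).
  - replace (trunc m a m) with Czero by (unfold trunc; rewrite Nat.ltb_irrefl; auto). peq.
  - intros i Hi; unfold trunc. destruct (Nat.ltb_spec i m); [auto|lia]. Qed.
Lemma lin_zero n a : lin n a (fun _ => Czero) = Czero.
Proof. induction n; simpl; auto. rewrite IHn; peq. Qed.
Lemma trunc_vadd m z h : trunc m (vadd z h) = vadd (trunc m z) (trunc m h).
Proof. apply functional_extensionality; intro i; unfold trunc, vadd.
  destruct (i <? m); auto. peq. Qed.

Lemma dir1 m K1 omega : compact_in m K1 ->
  (forall f, AD m K1 f <-> Obar m K1 f) -> AD m K1 omega ->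
  forall f, AD (S m) (graph m K1 omega) f -> Obar (S m) (graph m K1 omega) f.
Proof.
  intros HK Heq Hw f Hf.
  assert (HA : AD m K1 (fun z => f (ext m (omega z) z))).
  { split. { apply cont_f1; auto. apply Hf. apply Hw. }
    intros c r phi hr Hphi Hinj Hin.
    set (psi := fun z => ext m (omega (phi z)) (phi z)).
    apply (proj2 Hf c r psi hr).
    - intros i Hi. unfold psi, ext. destruct (Nat.eqb_spec i m).
      + exact (proj2 Hw c r phi hr Hphi Hinj Hin).
      + apply Hphi; lia.
    - intros z1 z2 H1 H2 E. apply Hinj; auto.
      apply (f_equal (trunc m)) in E. unfold psi in E.
      rewrite !trunc_ext in E by (apply (K1_inCn m K1 HK); auto). auto.
    - intros z Hz. apply graph_ext; auto. }
  apply Heq in HA. split; [apply Hf|].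
  intros eps Heps. destruct (proj2 HA eps Heps) as [U [g [HU [HKU [Hg Happ]]]]].
  exists (fun v => inCn (S m) v /\ U (trunc m v)), (fun v => g (trunc m v)).
  split; [|split; [|split]].
  - split. { intros x [H _]; auto. }
    intros x [Hx Ux]. destruct (proj2 HU _ Ux) as [r [Hr Hball]].
    exists r; split; auto. intros y Hy Hyx. split; auto. apply Hball.
    + apply inCn_trunc.
    + pose proof (vnorm_trunc m y x); lra.
  - intros v Hv. split; [apply Hv|]. apply HKU, (graph_K1 m K1 omega v Hv).
  - intros z [Hz Uz]. destruct (Hg _ Uz) as [a Ha]. exists (trunc m a).
    intros e He. destruct (Ha e He) as [d [Hd Hb]]. exists d; split; auto.
    intros h Hh Hpos Hhd. rewrite lin_trunc, trunc_vadd.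
    pose proof (vnorm_trunc m h (fun _ => Czero)) as Ht.
    replace (vsub h (fun _ => Czero)) with h in Ht by
      (apply functional_extensionality; intro i; unfold vsub; peq).
    replace (vsub (trunc m h) (trunc m (fun _ => Czero))) with (trunc m h) in Ht by
      (apply functional_extensionality; intro i; unfold vsub, trunc; destruct (i <? m); peq).
    destruct (Req_dec (vnorm m (trunc m h)) 0) as [E|E].
    + apply vnorm_zero_eq in E; [|apply inCn_trunc]. rewrite E, vadd_zero, lin_zero.
      replace (Csub (Csub (g (trunc m z)) (g (trunc m z))) Czero) with Czero by peq.
      rewrite Cabs_zero. nra.
    + pose proof (vnorm_ge0 m (trunc m h)).
      specialize (Hb (trunc m h) (inCn_trunc m h) ltac:(lra) ltac:(lra)). nra.
  - intros v Hv. rewrite (graph_eq m K1 omega v Hv) at 1. apply Happ.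
    apply (graph_K1 m K1 omega v Hv).
Qed.

Fixpoint minl {A : Type} (f : A -> R) (l : list A) : R :=
  match l with nil => 1 | cons i l' => Rmin (f i) (minl f l') end.
Lemma minl_pos {A} (f : A -> R) l : (forall i, 0 < f i) -> 0 < minl f l.
Proof. intros H; induction l; simpl; [lra|]. apply Rmin_pos; auto. Qed.
Lemma minl_le {A} (f : A -> R) l i : List.In i l -> minl f l <= f i.
Proof. induction l; simpl; [tauto|]. intros [->|H].
  - apply Rmin_l.
  - eapply Rle_trans; [apply Rmin_r|auto]. Qed.

Lemma Cabs_self a : Cabs (Csub a a) = 0.
Proof. replace (Csub a a) with Czero by peq. apply Cabs_zero. Qed.

Lemma unif m K1 omega U g : compact_in m K1 -> cont_on m K1 omega ->
  open_in (S m) U -> holo_on (S m) U g -> (forall z, K1 z -> U (ext m (omega z) z)) ->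
  forall eps, 0 < eps -> exists del, 0 < del /\ forall z, K1 z -> forall w,
    Cabs (Csub w (omega z)) < del ->
    U (ext m w z) /\ Cabs (Csub (g (ext m w z)) (g (ext m (omega z) z))) < eps.
Proof.
  intros HK Hw HU Hg HKU eps Heps.
  set (Good := fun x r => 0 < r /\ forall z, K1 z -> forall w,
     vnorm m (vsub z x) < r -> Cabs (Csub w (omega z)) < r ->
     U (ext m w z) /\ Cabs (Csub (g (ext m w z)) (g (ext m (omega x) x))) < eps/2).
  assert (Hgood : forall x, K1 x -> exists r, Good x r).
  { intros x Hx. set (p := ext m (omega x) x).
    assert (Up : U p) by (apply HKU; auto).
    destruct (proj2 HU p Up) as [r1 [Hr1 B1]].
    destruct (holo_cont _ _ _ _ HU Hg Up (eps/2) ltac:(lra)) as [r2 [Hr2 B2]].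
    set (rho := Rmin r1 r2).
    assert (Hrho : 0 < rho) by (apply Rmin_pos; auto).
    pose proof (Rmin_l r1 r2); pose proof (Rmin_r r1 r2).
    destruct (Hw x Hx (rho/3) ltac:(lra)) as [dw [Hdw Bw]].
    exists (Rmin dw (rho/3)). pose proof (Rmin_l dw (rho/3)); pose proof (Rmin_r dw (rho/3)).
    split; [apply Rmin_pos; lra|].
    intros z Hz w Hzx Hwz.
    assert (Hq : inCn (S m) (ext m w z)) by (apply ext_inCn, (proj1 HK); auto).
    assert (Hn : vnorm (S m) (vsub (ext m w z) p) < rho).
    { apply vnorm_lt_of; auto. unfold p; rewrite normsq_ext_diff.
      assert (normsq m (vsub z x) < (rho/3)*(rho/3)) by (apply normsq_lt_of; lra).
      pose proof (Cabs_sub_tri w (omega z) (omega x)).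
      specialize (Bw z Hz ltac:(lra)).
      pose proof (Cabs_ge0 (Csub w (omega x))).
      assert (Cabs (Csub w (omega x)) < 2 * (rho/3)) by lra.
      assert (Cabs (Csub w (omega x)) * Cabs (Csub w (omega x)) < (2*(rho/3))*(2*(rho/3))) by nra.
      assert (0 < rho*rho) by nra. lra. }
    unfold rho in Hn. split; [apply B1; auto; lra|]. apply B2; auto; lra. }
  set (I := {p : vec * R | K1 (fst p) /\ Good (fst p) (snd p)}).
  set (Ui := fun (i : I) y => inCn m y /\ vnorm m (vsub y (fst (proj1_sig i))) < snd (proj1_sig i)).
  destruct (proj2 HK I Ui) as [l Hl].
  { intros i; apply ball_open. }
  { intros x Hx. destruct (Hgood x Hx) as [r Hr].
    exists (exist _ (x, r) (conj Hx Hr)). unfold Ui; simpl. split.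
    - apply (proj1 HK); auto.
    - rewrite vnorm_self. apply Hr. }
  exists (minl (fun i : I => snd (proj1_sig i)) l). split.
  { apply minl_pos. intros i. exact (proj1 (proj2 (proj2_sig i))). }
  intros z Hz w Hwz.
  destruct (Hl z Hz) as [i [Hin [_ Hzi]]].
  pose proof (minl_le (fun i : I => snd (proj1_sig i)) l i Hin) as Hmin.
  destruct i as [[x r] [Hx [Hr Hb]]]. simpl in *.
  destruct (Hb z Hz w Hzi ltac:(lra)) as [HU1 H1].
  destruct (Hb z Hz (omega z) Hzi ltac:(rewrite Cabs_self; lra)) as [_ H2].
  split; auto. eapply Rle_lt_trans; [apply (Cabs_sub_tri _ (g (ext m (omega x) x)))|].
  rewrite (Cabs_sub_sym _ (g (ext m (omega z) z))). lra.
Qed.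

Lemma vsub_vadd z k : vsub (vadd z k) z = k.
Proof. apply functional_extensionality; intro i; unfold vsub, vadd; peq. Qed.
Lemma lin_comb n a b s k :
  lin n (fun i => Cadd (a i) (Cmul s (b i))) k = Cadd (lin n a k) (Cmul s (lin n b k)).
Proof. induction n; simpl. - peq. - rewrite IHn. peq. Qed.

Lemma chain m U g V h : open_in (S m) U -> holo_on (S m) U g ->
  open_in m V -> holo_on m V h ->
  holo_on m (fun z => V z /\ U (ext m (h z) z)) (fun z => g (ext m (h z) z)).
Proof.
  intros HU Hg HV Hh z [Vz Uz].
  set (p := ext m (h z) z) in *.
  destruct (Hg p Uz) as [a Ha]. destruct (Hh z Vz) as [b Hb].
  exists (fun i => Cadd (a i) (Cmul (a m) (b i))).
  intros eps Heps.
  pose proof (asum_ge0 m b) as HB. set (B := asum m b) in *.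
  set (A := Cabs (a m)). assert (HA : 0 <= A) by apply Cabs_ge0.
  set (M := B + 2).
  set (e1 := eps / (2 * M)).
  assert (He1 : 0 < e1) by (apply Rdiv_lt_0_compat; unfold M; lra).
  assert (He1M : e1 * M = eps / 2) by (unfold e1, M; field; lra).
  set (e2 := Rmin 1 (eps / (2 * (A + 1)))).
  assert (He2 : 0 < e2) by (apply Rmin_pos; [lra|apply Rdiv_lt_0_compat; lra]).
  assert (He21 : e2 <= 1) by apply Rmin_l.
  assert (He2A : A * e2 <= eps / 2).
  { assert (e2 <= eps / (2 * (A + 1))) by apply Rmin_r.
    assert (A * (eps / (2 * (A + 1))) <= eps / 2).
    { replace (A * (eps / (2 * (A + 1)))) with ((A / (A+1)) * (eps/2)) by (field; lra).
      assert (A / (A+1) <= 1).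
      { replace (A / (A+1)) with (1 - / (A+1)) by (field; lra).
        pose proof (Rinv_0_lt_compat (A+1) ltac:(lra)); lra. } nra. }
    nra. }
  destruct (Ha e1 He1) as [dg [Hdg Hga]].
  destruct (Hb e2 He2) as [dh [Hdh Hhb]].
  exists (Rmin dh (dg / M)). split.
  { apply Rmin_pos; auto. apply Rdiv_lt_0_compat; unfold M; lra. }
  intros k Hk Hkpos Hkd.
  pose proof (Rmin_l dh (dg / M)); pose proof (Rmin_r dh (dg / M)).
  set (nk := vnorm m k) in *.
  assert (Hzn : inCn m z) by (apply (proj1 HV); auto).
  set (zk := vadd z k).
  set (hd := Csub (h zk) (h z)).
  specialize (Hhb k Hk Hkpos (Rlt_le_trans _ _ _ Hkd H)). fold zk in Hhb. fold nk in Hhb. assert (He2nk : e2 * nk <= nk) by nra.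
  pose proof (lin_bound m b k) as HLb. fold B nk in HLb.
  assert (Hhd : Cabs hd <= (B + 1) * nk).
  { replace hd with (Cadd (Csub (Csub (h zk) (h z)) (lin m b k)) (lin m b k)) by (unfold hd; peq).
    eapply Rle_trans; [apply Cabs_triangle|]. lra. }
  set (q := ext m (h zk) zk).
  set (D := vsub q p).
  assert (HnD : normsq (S m) D = nk * nk + Cabs hd * Cabs hd).
  { unfold D, q, p. rewrite normsq_ext_diff. unfold zk. rewrite vsub_vadd.
    unfold nk; rewrite vnorm_sq. reflexivity. }
  pose proof (Cabs_ge0 hd). pose proof (vnorm_ge0 (S m) D).
  assert (HDle : vnorm (S m) D <= M * nk).
  { apply sq_le; [unfold M; nra|]. rewrite vnorm_sq, HnD.
    assert (Cabs hd * Cabs hd <= ((B+1)*nk) * ((B+1)*nk)) by nra.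
    unfold M; nra. }
  assert (HDpos : 0 < vnorm (S m) D).
  { assert (0 < vnorm (S m) D * vnorm (S m) D) by (rewrite vnorm_sq, HnD; nra). nra. }
  assert (HDd : vnorm (S m) D < dg).
  { assert (nk < dg / M) by lra.
    apply (Rmult_lt_compat_l M) in H3; [|unfold M; lra].
    replace (M * (dg / M)) with dg in H3 by (field; unfold M; lra). lra. }
  assert (HDin : inCn (S m) D).
  { apply inCn_vsub; apply ext_inCn; auto. apply inCn_vadd; auto. }
  specialize (Hga D HDin HDpos HDd). unfold D in Hga at 1. rewrite vadd_vsub in Hga.
  assert (HlinD : lin (S m) a D = Cadd (lin m a k) (Cmul (a m) hd)).
  { simpl. f_equal.
    - apply lin_ext; intros i Hi; split; auto. unfold D, vsub, q, p, ext, zk, vadd.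
      destruct (Nat.eqb_spec i m); [lia|]. peq.
    - f_equal. unfold D, vsub, q, p, ext. rewrite Nat.eqb_refl. reflexivity. }
  rewrite HlinD in Hga.
  rewrite lin_comb. fold zk q.
  replace (Csub (Csub (g q) (g p)) (Cadd (lin m a k) (Cmul (a m) (lin m b k)))) with
    (Cadd (Csub (Csub (g q) (g p)) (Cadd (lin m a k) (Cmul (a m) hd)))
          (Cmul (a m) (Csub (Csub (h zk) (h z)) (lin m b k)))) by (unfold hd; peq).
  eapply Rle_trans; [apply Cabs_triangle|]. rewrite Cabs_mul. fold A.
  pose proof (Cabs_ge0 (Csub (Csub (h zk) (h z)) (lin m b k))).
  assert (e1 * vnorm (S m) D <= e1 * (M * nk)) by (apply Rmult_le_compat_l; lra).
  assert (A * Cabs (Csub (Csub (h zk) (h z)) (lin m b k)) <= A * (e2 * nk))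
    by (apply Rmult_le_compat_l; lra).
  assert (A * (e2 * nk) <= eps / 2 * nk) by nra.
  nra.
Qed.

Lemma holo1_ext c r g1 g2 : (forall z, Defs.disc c r z -> g1 z = g2 z) ->
  holo1_on (Defs.disc c r) g1 -> holo1_on (Defs.disc c r) g2.
Proof.
  intros He H z Dz. destruct (H z Dz) as [a Ha]. exists a. intros eps Heps.
  destruct (Ha eps Heps) as [d [Hd Hb]]. unfold Defs.disc in Dz.
  exists (Rmin d (r - Cabs (Csub z c))). split; [apply Rmin_pos; lra|].
  intros h Hh1 Hh2. pose proof (Rmin_l d (r - Cabs (Csub z c))).
  pose proof (Rmin_r d (r - Cabs (Csub z c))).
  assert (Defs.disc c r (Cadd z h)).
  { unfold Defs.disc. replace (Csub (Cadd z h) c) with (Cadd (Csub z c) h) by peq.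
    pose proof (Cabs_triangle (Csub z c) h). lra. }
  rewrite <- !He by (unfold Defs.disc; auto). apply Hb; lra.
Qed.

Lemma obar_f1 m K1 omega : compact_in m K1 ->
  (forall f, AD m K1 f <-> Obar m K1 f) -> AD m K1 omega ->
  forall f, Obar (S m) (graph m K1 omega) f -> Obar m K1 (fun z => f (ext m (omega z) z)).
Proof.
  intros HK Heq Hw f Hf. split.
  { apply cont_f1; auto. apply Hf. apply Hw. }
  intros eps Heps.
  destruct (proj2 Hf (eps/2) ltac:(lra)) as [U [g [HU [HKU [Hg Happ]]]]].
  assert (HKU' : forall z, K1 z -> U (ext m (omega z) z))
    by (intros; apply HKU, graph_ext; auto).
  destruct (unif m K1 omega U g HK (proj1 Hw) HU Hg HKU' (eps/2) ltac:(lra))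
    as [del [Hdel Hun]].
  destruct (proj2 (proj1 (Heq omega) Hw) del Hdel) as [V [h [HV [HKV [Hh Happh]]]]].
  exists (fun z => V z /\ U (ext m (h z) z)), (fun z => g (ext m (h z) z)).
  split; [|split; [|split]].
  - split. { intros x [Hx _]; apply (proj1 HV); auto. }
    intros z [Vz Uz]. destruct (proj2 HV z Vz) as [r1 [Hr1 B1]].
    destruct (proj2 HU _ Uz) as [r2 [Hr2 B2]].
    destruct (holo_cont _ _ _ _ HV Hh Vz (r2/2) ltac:(lra)) as [d3 [Hd3 B3]].
    exists (Rmin r1 (Rmin (r2/2) d3)).
    pose proof (Rmin_l r1 (Rmin (r2/2) d3)); pose proof (Rmin_r r1 (Rmin (r2/2) d3)).
    pose proof (Rmin_l (r2/2) d3); pose proof (Rmin_r (r2/2) d3).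
    split. { apply Rmin_pos; auto. apply Rmin_pos; lra. }
    intros y Hy Hyz. split; [apply B1; auto; lra|].
    apply B2; [apply ext_inCn; auto|]. apply vnorm_lt_of; auto.
    rewrite normsq_ext_diff.
    assert (normsq m (vsub y z) < (r2/2)*(r2/2)) by (apply normsq_lt_of; lra).
    specialize (B3 y Hy ltac:(lra)).
    pose proof (Cabs_ge0 (Csub (h y) (h z))).
    assert (Cabs (Csub (h y) (h z)) * Cabs (Csub (h y) (h z)) < (r2/2)*(r2/2)) by nra.
    assert (0 < r2 * r2) by nra. lra.
  - intros z Hz. split; [apply HKV; auto|]. apply (Hun z Hz).
    rewrite Cabs_sub_sym. apply Happh; auto.
  - apply chain; auto.
  - intros z Hz.
    assert (Hhz : Cabs (Csub (h z) (omega z)) < del) by (rewrite Cabs_sub_sym; apply Happh; auto).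
    destruct (Hun z Hz (h z) Hhz) as [_ H2].
    specialize (Happ _ (graph_ext m K1 omega HK z Hz)).
    eapply Rle_lt_trans; [apply (Cabs_sub_tri _ (g (ext m (omega z) z)))|].
    rewrite (Cabs_sub_sym (g (ext m (omega z) z))). lra.
Qed.

Lemma dir2 m K1 omega : compact_in m K1 ->
  (forall f, AD m K1 f <-> Obar m K1 f) -> AD m K1 omega ->
  forall f, Obar (S m) (graph m K1 omega) f -> AD (S m) (graph m K1 omega) f.
Proof.
  intros HK Heq Hw f Hf. split; [apply Hf|].
  intros c r phi hr Hphi Hinj Hin.
  pose proof (proj2 (Heq _) (obar_f1 m K1 omega HK Heq Hw f Hf)) as HA.
  apply (holo1_ext c r (fun z => (fun z => f (ext m (omega z) z)) (trunc m (phi z)))).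
  { intros z Hz. simpl. rewrite <- (graph_eq m K1 omega (phi z) (Hin z Hz)). auto. }
  apply (proj2 HA c r (fun z => trunc m (phi z)) hr).
  - intros i Hi. unfold trunc. destruct (Nat.ltb_spec i m); [|lia]. apply Hphi; lia.
  - intros z1 z2 H1 H2 E. apply Hinj; auto.
    rewrite (graph_eq m K1 omega (phi z1) (Hin z1 H1)), (graph_eq m K1 omega (phi z2) (Hin z2 H2)), E.
    auto.
  - intros z Hz. apply (graph_K1 m K1 omega), Hin; auto.
Qed.

Theorem mainTheorem15 :
  forall (m : nat) (K1 : vec -> Prop) (omega : vec -> Cx),
    compact_in m K1 ->
    (forall f, AD m K1 f <-> Obar m K1 f) ->
    AD m K1 omega ->
    forall f, AD (S m) (graph m K1 omega) f <-> Obar (S m) (graph m K1 omega) f.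
Proof.
  intros m K1 omega HK Heq Hw f. split.
  - apply dir1; auto.
  - apply dir2; auto.
Qed.
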